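(* Let $T,d\ge1$, $\gamma>0$, $\beta>0$, and for each $t\in\{1,\dots,T\}$ let $(x_{t1},y_{t1}),\dots,(x_{tm_t},y_{tm_t})\in\mathbb{R}^d\times\mathbb{R}$ be given, with $X_t=[x_{t1},\dots,x_{tm_t}]$. Let $l$ be a loss that is $c$-admissible with respect to the class of linear functions. Let $\sigma_{ti}$ ($t=1,\dots,T$, $i=1,\dots,m_t$) be independent Rademacher variables (uniform on $\{-1,1\}$), and define $$\mathfrak{R}_n(l\circ(A,a_0,U))=2E_\sigma\sup_{a_t,a_0,U}\sum_{t=1}^{T}\sum_{i=1}^{m_t}\sigma_{ti}\,l\big(y_{ti},\langle a_t+a_0,U^Tx_{ti}\rangle\big),$$ where the supremum is over $A=[a_1,\dots,a_T]\in\mathbb{R}^{d\times T}$, $a_0\in\mathbb{R}^d$ and $U\in\mathbb{R}^{d\times d}$ with $U^TU=I$, $\|A\|_{2,1}^2\le T/\gamma$ and $\|a_0\|_2^2\le1/\beta$. Then $$\mathfrak{R}_n(l\circ(A,a_0,U))\le 2c\left(\sqrt{\frac{T}{\gamma}}+\sqrt{\frac1\beta}\right)\sqrt{\sum_{t=1}^{T}m_tS(X_t)},$$ where $S(X_t)=\frac1{m_t}\sum_{i=1}^{m_t}\|x_{ti}\|_2^2$.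
   Context: For $A\in\mathbb{R}^{d\times T}$ with rows $a^1,\dots,a^d$, $\|A\|_{2,1}=\sum_{i=1}^d\|a^i\|_2$. A loss $l$ is $c$-admissible with respect to a hypothesis class $H$ if there is $c\ge0$ such that for all $h,h'\in H$ and all $(x,y)$, $|l(y,h(x))-l(y,h'(x))|\le c|h(x)-h'(x)|$. *)

(* Defs.v *)
From HB Require Import structures.
From mathcomp Require Import all_boot all_order all_algebra.
From mathcomp Require Import classical_sets reals.
Set Implicit Arguments. Unset Strict Implicit. Unset Printing Implicit Defensive.
Import Order.TTheory GRing.Theory Num.Theory.
Local Open Scope ring_scope.

Definition dotv (R : realType) (d : nat) (u v : 'cV[R]_d) : R :=
  \sum_(k < d) u k 0 * v k 0.
Definition norm2 (R : realType) (d : nat) (u : 'cV[R]_d) : R :=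
  Num.sqrt (dotv u u).

Definition norm21 (R : realType) (d T : nat) (A : 'M[R]_(d, T)) : R :=
  \sum_(i < d) Num.sqrt (\sum_(j < T) A i j ^+ 2).

Definition c_admissible_linear (R : realType) (d : nat) (l : R -> R -> R) (c : R) : Prop :=
  0 <= c /\
  forall (w w' x : 'cV[R]_d) (y : R),
    `| l y (dotv w x) - l y (dotv w' x) | <= c * `| dotv w x - dotv w' x |.

Definition rsign (R : realType) (b : bool) : R := if b then 1 else -1.

Definition Sdata (R : realType) (d mt : nat) (X : 'I_mt -> 'cV[R]_d) : R :=
  (mt%:R)^-1 * \sum_(i < mt) norm2 (X i) ^+ 2.

(* Rademacher complexity 2 E_sigma sup_{A,a0,U} sum_t sum_i sigma_ti l(y_ti, <a_t+a0, U^T x_ti>),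
   the expectation being the uniform average over all sign vectors sigma
   indexed by the pairs (t, i). *)
Definition rad_complexity (R : realType) (d T : nat) (m : 'I_T -> nat)
  (x : forall t : 'I_T, 'I_(m t) -> 'cV[R]_d) (y : forall t : 'I_T, 'I_(m t) -> R)
  (l : R -> R -> R) (gamma beta : R) : R :=
  2 * ((#|{ffun {t : 'I_T & 'I_(m t)} -> bool}|%:R)^-1 *
   \sum_(s : {ffun {t : 'I_T & 'I_(m t)} -> bool})
     sup [set v : R | exists (A : 'M[R]_(d, T)) (a0 : 'cV[R]_d) (U : 'M[R]_d),
            [/\ U^T *m U = 1%:M,
                norm21 A ^+ 2 <= T%:R / gamma,
                norm2 a0 ^+ 2 <= 1 / beta &
                v = \sum_(t < T) \sum_(i < m t)
                      rsign R (s (Tagged (fun t => 'I_(m t)) i)) *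
                      l (y t i) (dotv (col t A + a0) (U^T *m x t i))]]%classic).

(* Main.v *)
Require Import Defs.
From HB Require Import structures.
From mathcomp Require Import all_boot all_order all_algebra.
From mathcomp Require Import classical_sets reals.
From mathcomp Require Import ring lra.
Import Order.TTheory GRing.Theory Num.Theory.
Local Open Scope ring_scope.

Set Implicit Arguments. Unset Strict Implicit.

Section Gen.
Variable R : realType.

Lemma CS2 (K : finType) (a b : K -> R) :
  (\sum_k a k * b k) ^+ 2 <= (\sum_k a k ^+ 2) * (\sum_k b k ^+ 2).
Proof.
have E : \sum_i \sum_j (a i * b j - a j * b i) ^+ 2 =
   2 * ((\sum_k a k ^+ 2) * (\sum_k b k ^+ 2)) - 2 * (\sum_k a k * b k) ^+ 2.
  transitivity (\sum_i \sum_j (a i ^+ 2 * b j ^+ 2 + a j ^+ 2 * b i ^+ 2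
                 - 2 * (a i * b i * (a j * b j)))).
    by apply: eq_bigr => i _; apply: eq_bigr => j _; ring.
  under eq_bigr do rewrite sumrB big_split /=.
  rewrite sumrB big_split /= [X in _ + X - _]exchange_big /=.
  have H1 : \sum_i \sum_j a i ^+ 2 * b j ^+ 2 =
            (\sum_k a k ^+ 2) * (\sum_k b k ^+ 2).
    by rewrite mulr_suml; apply: eq_bigr => i _; rewrite mulr_sumr.
  have H3 : \sum_i \sum_j 2 * (a i * b i * (a j * b j)) =
            2 * (\sum_k a k * b k) ^+ 2.
    under eq_bigr do rewrite -mulr_sumr.
    rewrite -mulr_sumr; congr (2 * _).
    by rewrite expr2 mulr_suml; apply: eq_bigr => i _; rewrite mulr_sumr.
  rewrite H1 H3; ring.
have : 0 <= \sum_i \sum_j (a i * b j - a j * b i) ^+ 2.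
  by apply: sumr_ge0 => i _; apply: sumr_ge0 => j _; apply: sqr_ge0.
rewrite E; lra.
Qed.

Lemma CS (K : finType) (a b : K -> R) :
  \sum_k a k * b k <= Num.sqrt (\sum_k a k ^+ 2) * Num.sqrt (\sum_k b k ^+ 2).
Proof.
rewrite -sqrtrM; last by apply: sumr_ge0 => k _; apply: sqr_ge0.
apply: le_trans (ler_norm _) _.
rewrite -sqrtr_sqr; apply: ler_wsqrtr; exact: CS2.
Qed.


Definition flip (I : finType) (j : I) (s : {ffun I -> bool}) : {ffun I -> bool} :=
  [ffun q => if q == j then ~~ s q else s q].

Lemma flipK (I : finType) (j : I) : involutive (flip j).
Proof.
move=> s; apply/ffunP => q; rewrite !ffunE; case: eqP => // _; exact: negbK.
Qed.

Lemma flipj (I : finType) (j : I) s : flip j s j = ~~ s j.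
Proof. by rewrite ffunE eqxx. Qed.

Lemma flipne (I : finType) (j q : I) s : q != j -> flip j s q = s q.
Proof. by move=> h; rewrite ffunE (negbTE h). Qed.

Lemma sum_flip (I : finType) (j : I) (F : {ffun I -> bool} -> R) :
  \sum_s F (flip j s) = \sum_s F s.
Proof. by rewrite [RHS](reindex_inj (can_inj (flipK j))). Qed.

Section Contraction.
Variables (I : finType) (P : Type) (c : R) (phi : I -> R -> R) (g : P -> I -> R).
Hypothesis c0 : 0 <= c.
Hypothesis Lip : forall i u v, `|phi i u - phi i v| <= c * `|u - v|.

Lemma step (j : I) (a b : P -> R) (G : {ffun I -> bool} -> P -> R) :
  (forall s p, G (flip j s) p = G s p) ->
  (forall p q, a p - a q <= `|b p - b q|) ->
  forall pi : {ffun I -> bool} -> P, exists pi' : {ffun I -> bool} -> P,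
   \sum_(s : {ffun I -> bool}) (rsign R (s j) * a (pi s) + G s (pi s)) <=
   \sum_(s : {ffun I -> bool}) (rsign R (s j) * b (pi' s) + G s (pi' s)).
Proof.
move=> HG Hab pi.
pose cond (s : {ffun I -> bool}) := if s j then b (pi s) < b (pi (flip j s))
               else b (pi (flip j s)) < b (pi s).
exists (fun s => if cond s then pi (flip j s) else pi s).
set L := fun s : {ffun I -> bool} => rsign R (s j) * a (pi s) + G s (pi s).
set Rr := fun s : {ffun I -> bool} => rsign R (s j) * b (if cond s then pi (flip j s) else pi s)
                   + G s (if cond s then pi (flip j s) else pi s).
have key : forall s : {ffun I -> bool}, s j -> L s + L (flip j s) <= Rr s + Rr (flip j s).
  move=> s sj; rewrite /L /Rr /cond flipj sj flipK /= !HG.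
  have := Hab (pi s) (pi (flip j s)).
  case: ltP => h.
    rewrite ler0_norm ?subr_le0 ?(ltW h) //; lra.
  rewrite ger0_norm ?subr_ge0 //; lra.
have key2 : forall s : {ffun I -> bool}, L s + L (flip j s) <= Rr s + Rr (flip j s).
  move=> s; case sj: (s j); first exact: key.
  have := key (flip j s); rewrite flipj sj flipK => /(_ isT); lra.
have H : \sum_(s : {ffun I -> bool}) L s + \sum_(s : {ffun I -> bool}) L s <=
         \sum_(s : {ffun I -> bool}) Rr s + \sum_(s : {ffun I -> bool}) Rr s.
  rewrite -{1}(sum_flip j L) -{1}(sum_flip j Rr) -!big_split /=.
  by apply: ler_sum => s _; rewrite addrC [X in _ <= X]addrC; exact: key2.
change (\sum_(s : {ffun I -> bool}) L s <= \sum_(s : {ffun I -> bool}) Rr s); lra.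
Qed.

Definition Fr (r : seq I) (s : {ffun I -> bool}) (p : P) :=
  \sum_q rsign R (s q) * (if q \in r then c * g p q else phi q (g p q)).

Lemma contr_ind r : forall pi : {ffun I -> bool} -> P,
  exists pi' : {ffun I -> bool} -> P,
  \sum_(s : {ffun I -> bool}) Fr [::] s (pi s) <= \sum_(s : {ffun I -> bool}) Fr r s (pi' s).
Proof.
elim: r => [|j r IH] pi; first by exists pi.
have [pi1 H1] := IH pi.
case jr: (j \in r).
  exists pi1.
  suff E : forall s p, Fr (j :: r) s p = Fr r s p.
    by under [X in _ <= X]eq_bigr do rewrite E.
  move=> s p; apply: eq_bigr => q _; rewrite in_cons.
  by case: eqP => [->|_] //=; rewrite jr.
pose G (s : {ffun I -> bool}) (p : P) := \sum_(q | q != j)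
   rsign R (s q) * (if q \in r then c * g p q else phi q (g p q)).
have EF1 : forall s p, Fr r s p = rsign R (s j) * phi j (g p j) + G s p.
  by move=> s p; rewrite /Fr (bigD1 j) //= jr.
have EF2 : forall s p, Fr (j :: r) s p = rsign R (s j) * (c * g p j) + G s p.
  move=> s p; rewrite /Fr (bigD1 j) //= in_cons eqxx /=; congr (_ + _).
  by apply: eq_bigr => q qj; rewrite in_cons (negbTE qj).
have HG : forall s p, G (flip j s) p = G s p.
  by move=> s p; apply: eq_bigr => q qj; rewrite flipne.
have Hab : forall p q, phi j (g p j) - phi j (g q j) <= `|c * g p j - c * g q j|.
  move=> p q; apply: le_trans (ler_norm _) _.
  by rewrite -mulrBr normrM (ger0_norm c0).
have [pi2 H2] := step HG Hab pi1.
exists pi2; apply: le_trans H1 _.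
under eq_bigr do rewrite EF1.
under [X in _ <= X]eq_bigr do rewrite EF2.
exact: H2.
Qed.

Lemma contraction (pi : {ffun I -> bool} -> P) :
  exists pi' : {ffun I -> bool} -> P,
  \sum_(s : {ffun I -> bool}) \sum_q rsign R (s q) * phi q (g (pi s) q) <=
  \sum_(s : {ffun I -> bool}) \sum_q rsign R (s q) * (c * g (pi' s) q).
Proof.
have [pi' H] := contr_ind (enum I) pi.
exists pi'; move: H; rewrite /Fr.
under eq_bigr do under eq_bigr do rewrite in_nil.
by under [X in _ <= X -> _]eq_bigr do under eq_bigr do rewrite mem_enum.
Qed.

End Contraction.

Lemma sum_ffun1 (I : finType) :
  \sum_(s : {ffun I -> bool}) (1 : R) = #|{ffun I -> bool}|%:R.
Proof. by rewrite sumr_const. Qed.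

Lemma rsign2 b : rsign R b * rsign R b = 1.
Proof. by case: b; rewrite /rsign ?mulr1 ?mulrNN ?mulr1. Qed.

Lemma rad_cross (I : finType) (p q : I) :
  \sum_(s : {ffun I -> bool}) rsign R (s p) * rsign R (s q) =
  if p == q then #|{ffun I -> bool}|%:R else 0.
Proof.
case: eqP => [<-|/eqP npq].
  by under eq_bigr do rewrite rsign2; rewrite sum_ffun1.
set F := fun s : {ffun I -> bool} => rsign R (s p) * rsign R (s q).
have HF : forall s, F (flip p s) = - F s.
  move=> s; rewrite /F flipj flipne; last by rewrite eq_sym.
  by case: (s p); rewrite /rsign /= ?mulNr ?opprK.
have := sum_flip p F; under eq_bigr do rewrite HF.
rewrite sumrN => H.
change (\sum_(s : {ffun I -> bool}) F s = 0); lra.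
Qed.

Lemma rad_sq (I : finType) (K : pred I) (a : I -> R) :
  \sum_(s : {ffun I -> bool}) (\sum_(q | K q) rsign R (s q) * a q) ^+ 2 =
  #|{ffun I -> bool}|%:R * \sum_(q | K q) a q ^+ 2.
Proof.
under eq_bigr do rewrite expr2 mulr_suml; under eq_bigr do under eq_bigr do rewrite mulr_sumr.
rewrite exchange_big /= mulr_sumr; apply: eq_bigr => q Kq.
rewrite exchange_big /= (bigD1 q) //= [X in _ + X]big1 ?addr0; last first.
  move=> q' /andP [_ nq].
  transitivity (a q * a q' * \sum_(s : {ffun I -> bool}) rsign R (s q) * rsign R (s q')).
    by rewrite mulr_sumr; apply: eq_bigr => s _; ring.
  by rewrite rad_cross eq_sym (negbTE nq) mulr0.
have := rad_cross q q; rewrite eqxx => <-.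
by rewrite mulr_suml; apply: eq_bigr => s _; ring.
Qed.

Lemma sum_sqrt (K : finType) (Q : K -> R) : (forall k, 0 <= Q k) ->
  \sum_k Num.sqrt (Q k) <= Num.sqrt (\sum_k Q k) * Num.sqrt (#|K|%:R).
Proof.
move=> Q0.
have E1 : \sum_k Num.sqrt (Q k) ^+ 2 = \sum_k Q k.
  by apply: eq_bigr => k _; rewrite sqr_sqrtr.
have E2 : \sum_(k : K) (1 : R) ^+ 2 = #|K|%:R.
  by under eq_bigr do rewrite expr1n; rewrite sumr_const.
have := CS (fun k => Num.sqrt (Q k)) (fun _ => 1); rewrite /= E1 E2.
by under eq_bigr do rewrite mulr1.
Qed.


Lemma dotv_ge0 (d : nat) (u : 'cV[R]_d) : 0 <= dotv u u.
Proof. by apply: sumr_ge0 => k _; rewrite -expr2 sqr_ge0. Qed.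

Lemma norm2_sq (d : nat) (u : 'cV[R]_d) : norm2 u ^+ 2 = dotv u u.
Proof. by rewrite /norm2 sqr_sqrtr // dotv_ge0. Qed.

Lemma norm2_ge0 (d : nat) (u : 'cV[R]_d) : 0 <= norm2 u.
Proof. exact: sqrtr_ge0. Qed.

Lemma dotvDl (d : nat) (u v w : 'cV[R]_d) : dotv (u + v) w = dotv u w + dotv v w.
Proof. by rewrite /dotv -big_split; apply: eq_bigr => k _; rewrite mxE mulrDl. Qed.

Lemma dotvZr (d : nat) (u w : 'cV[R]_d) k : dotv u (k *: w) = k * dotv u w.
Proof. by rewrite /dotv mulr_sumr; apply: eq_bigr => i _; rewrite mxE; ring. Qed.

Lemma dotv_sumr (d : nat) (J : finType) (P : pred J) (u : 'cV[R]_d) (w : J -> 'cV[R]_d) :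
  dotv u (\sum_(j | P j) w j) = \sum_(j | P j) dotv u (w j).
Proof.
rewrite /dotv exchange_big /=; apply: eq_bigr => k _.
by rewrite summxE mulr_sumr.
Qed.

Lemma dotv_mx (d : nat) (u v : 'cV[R]_d) : dotv u v = (u^T *m v) 0 0.
Proof. by rewrite mxE; apply: eq_bigr => k _; rewrite mxE. Qed.

Lemma dotv_UT (d : nat) (U : 'M[R]_d) (v : 'cV[R]_d) :
  U^T *m U = 1%:M -> dotv (U^T *m v) (U^T *m v) = dotv v v.
Proof.
move=> /mulmx1C UU; rewrite !dotv_mx trmx_mul trmxK.
by rewrite mulmxA -[_ *m U *m _]mulmxA UU mulmx1.
Qed.

Lemma dotv_CS (d : nat) (u v : 'cV[R]_d) : dotv u v <= norm2 u * norm2 v.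
Proof.
have E : forall w : 'cV[R]_d, \sum_k w k 0 ^+ 2 = dotv w w.
  by move=> w; apply: eq_bigr => k _; rewrite expr2.
by have := CS (fun k => u k 0) (fun k => v k 0); rewrite /= !E.
Qed.

Lemma norm2_UT (d : nat) (U : 'M[R]_d) (v : 'cV[R]_d) :
  U^T *m U = 1%:M -> norm2 (U^T *m v) = norm2 v.
Proof. by move=> UU; rewrite /norm2 dotv_UT. Qed.

Lemma le_sum_term (J : finType) (F : J -> R) j :
  (forall i, 0 <= F i) -> F j <= \sum_i F i.
Proof.
by move=> F0; rewrite (bigD1 j) //= lerDl; apply: sumr_ge0 => i _.
Qed.

Lemma le_sqrt_sq (x y : R) : 0 <= x -> x ^+ 2 <= y -> x <= Num.sqrt y.
Proof.
move=> x0 h; rewrite -(ger0_norm x0) -sqrtr_sqr; exact: ler_wsqrtr.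
Qed.

Lemma norm21_ge0 (d T : nat) (A : 'M[R]_(d, T)) : 0 <= norm21 A.
Proof. by apply: sumr_ge0 => i _; apply: sqrtr_ge0. Qed.


Lemma linbound (T d : nat) (m : 'I_T -> nat)
  (xx : {t : 'I_T & 'I_(m t)} -> 'cV[R]_d) (eps : {t : 'I_T & 'I_(m t)} -> R)
  (A : 'M[R]_(d, T)) (a0 : 'cV[R]_d) (U : 'M[R]_d) (Ta Tb : R) :
  U^T *m U = 1%:M -> norm21 A ^+ 2 <= Ta -> norm2 a0 ^+ 2 <= Tb ->
  \sum_q eps q * dotv (col (tag q) A + a0) (U^T *m xx q) <=
  Num.sqrt Ta * Num.sqrt (\sum_t norm2 (\sum_(q | tag q == t) eps q *: xx q) ^+ 2)
  + Num.sqrt Tb * norm2 (\sum_q eps q *: xx q).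
Proof.
move=> UU hA ha.
have E : \sum_q eps q * dotv (col (tag q) A + a0) (U^T *m xx q) =
  \sum_q dotv (col (tag q) A) (U^T *m (eps q *: xx q)) +
  dotv a0 (U^T *m \sum_q eps q *: xx q).
  rewrite mulmx_sumr dotv_sumr -big_split /=; apply: eq_bigr => q _.
  by rewrite dotvDl -!scalemxAr !dotvZr; ring.
rewrite E; apply: lerD; last first.
  apply: le_trans (dotv_CS _ _) _; rewrite norm2_UT //.
  by apply: (ler_wpM2r (norm2_ge0 _)); apply: le_sqrt_sq (norm2_ge0 _) ha.
set Z := fun t => \sum_(q | tag q == t) eps q *: xx q.
rewrite (partition_big (fun q => tag q) xpredT) //=.
have E2 : forall t, \sum_(q | true && (tag q == t))
    dotv (col (tag q) A) (U^T *m (eps q *: xx q)) = dotv (col t A) (U^T *m Z t).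
  move=> t; rewrite /Z mulmx_sumr dotv_sumr; apply: eq_bigr => q /eqP ->.
  by [].
under eq_bigr do rewrite E2.
have E3 : \sum_t dotv (col t A) (U^T *m Z t) =
    \sum_k \sum_t A k t * (U^T *m Z t) k 0.
  rewrite exchange_big /=; apply: eq_bigr => t _; apply: eq_bigr => k _.
  by rewrite mxE.
rewrite E3.
apply: (le_trans (y := \sum_k Num.sqrt (\sum_t A k t ^+ 2) *
                      Num.sqrt (\sum_t (U^T *m Z t) k 0 ^+ 2))).
  by apply: ler_sum => k _; apply: CS.
apply: (le_trans (y := \sum_k Num.sqrt (\sum_t A k t ^+ 2) *
                      Num.sqrt (\sum_t dotv (Z t) (Z t)))).
  apply: ler_sum => k _; apply: ler_wpM2l; first exact: sqrtr_ge0.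
  apply: ler_wsqrtr; apply: ler_sum => t _.
  rewrite -(dotv_UT (Z t) UU) /dotv expr2.
  apply: (@le_sum_term _ (fun k => (U^T *m Z t) k 0 * (U^T *m Z t) k 0) k).
  by move=> i; rewrite -expr2 sqr_ge0.
rewrite -mulr_suml.
have E4 : \sum_t norm2 (Z t) ^+ 2 = \sum_t dotv (Z t) (Z t).
  by apply: eq_bigr => t _; rewrite norm2_sq.
rewrite E4; apply: ler_wpM2r; first exact: sqrtr_ge0.
exact: le_sqrt_sq (norm21_ge0 _) hA.
Qed.


Lemma rad_sqv (d : nat) (I : finType) (K : pred I) (v : I -> 'cV[R]_d) :
  \sum_(s : {ffun I -> bool})
     dotv (\sum_(q | K q) rsign R (s q) *: v q) (\sum_(q | K q) rsign R (s q) *: v q) =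
  #|{ffun I -> bool}|%:R * \sum_(q | K q) dotv (v q) (v q).
Proof.
have E : forall s : {ffun I -> bool},
   dotv (\sum_(q | K q) rsign R (s q) *: v q) (\sum_(q | K q) rsign R (s q) *: v q) =
   \sum_k (\sum_(q | K q) rsign R (s q) * v q k 0) ^+ 2.
  move=> s; apply: eq_bigr => k _; rewrite expr2 summxE.
  by congr (_ * _); apply: eq_bigr => q _; rewrite mxE.
under eq_bigr do rewrite E.
rewrite exchange_big /=.
under eq_bigr do rewrite rad_sq.
by rewrite -mulr_sumr exchange_big /=; congr (_ * _).
Qed.

Lemma sum_sig (T : nat) (m : 'I_T -> nat) (F : forall t : 'I_T, 'I_(m t) -> R) :
  \sum_(t < T) \sum_(i < m t) F t i =
  \sum_(q : {t : 'I_T & 'I_(m t)}) F (tag q) (tagged q).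
Proof. exact: (sig_big_dep xpredT (fun _ => xpredT) F). Qed.

End Gen.

Unset Implicit Arguments. Set Strict Implicit.

Theorem lemma2 (R : realType) (T d : nat) (gamma beta c : R)
  (m : 'I_T -> nat)
  (x : forall t : 'I_T, 'I_(m t) -> 'cV[R]_d) (y : forall t : 'I_T, 'I_(m t) -> R)
  (l : R -> R -> R) :
  (0 < T)%N -> (0 < d)%N -> 0 < gamma -> 0 < beta ->
  c_admissible_linear d l c ->
  rad_complexity x y l gamma beta <=
    2 * c * (Num.sqrt (T%:R / gamma) + Num.sqrt (1 / beta)) *
    Num.sqrt (\sum_(t < T) (m t)%:R * Sdata (x t)).
Proof.
move=> T0 d0 g0 b0 [c0 adm].
pose I := {t : 'I_T & 'I_(m t)}.
pose xx (q : I) := x (tag q) (tagged q).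
pose yy (q : I) := y (tag q) (tagged q).
pose k0 : 'I_d := Ordinal d0.
pose e : 'cV[R]_d := \col_(k < d) (if k == k0 then 1 else 0).
have de : forall u, dotv (u *: e) e = u.
  move=> u; rewrite /dotv (bigD1 k0) //= big1 ?addr0.
    by rewrite !mxE eqxx mulr1 mulr1.
  by move=> k /negbTE kk; rewrite !mxE kk mulr0.
have Lip : forall q u v, `|l (yy q) u - l (yy q) v| <= c * `|u - v|.
  by move=> q u v; have := adm (u *: e) (v *: e) e (yy q); rewrite !de.
pose feas (p : 'M[R]_(d, T) * 'cV[R]_d * 'M[R]_d) : Prop :=
  [/\ p.2^T *m p.2 = 1%:M, norm21 p.1.1 ^+ 2 <= T%:R / gamma &
      norm2 p.1.2 ^+ 2 <= 1 / beta].
pose P := {p | feas p}.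
pose gg (p : P) (q : I) :=
  dotv (col (tag q) (sval p).1.1 + (sval p).1.2) ((sval p).2^T *m xx q).
pose V (s : {ffun I -> bool}) (p : P) := \sum_q rsign R (s q) * l (yy q) (gg p q).
pose B (eps : I -> R) :=
  Num.sqrt (T%:R / gamma) *
    Num.sqrt (\sum_t norm2 (\sum_(q | tag q == t) eps q *: xx q) ^+ 2)
  + Num.sqrt (1 / beta) * norm2 (\sum_q eps q *: xx q).
have B0 : forall eps, 0 <= B eps.
  by move=> eps; apply: addr_ge0; apply: mulr_ge0;
     rewrite ?sqrtr_ge0 ?norm2_ge0.
have LB : forall (eps : I -> R) (p : P), \sum_q eps q * gg p q <= B eps.
  move=> eps [[[A a0] U] [UU hA ha]]; exact: linbound.
pose S (s : {ffun I -> bool}) : set R :=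
  [set v : R | exists (A : 'M[R]_(d, T)) (a0 : 'cV[R]_d) (U : 'M[R]_d),
            [/\ U^T *m U = 1%:M,
                norm21 A ^+ 2 <= T%:R / gamma,
                norm2 a0 ^+ 2 <= 1 / beta &
                v = \sum_(t < T) \sum_(i < m t)
                      rsign R (s (Tagged (fun t => 'I_(m t)) i)) *
                      l (y t i) (dotv (col t A + a0) (U^T *m x t i))]]%classic.
have Sconv : forall (s : {ffun I -> bool}) (A : 'M[R]_(d, T)) (a0 : 'cV[R]_d) (U : 'M[R]_d),
  \sum_(t < T) \sum_(i < m t)
      rsign R (s (Tagged (fun t => 'I_(m t)) i)) *
      l (y t i) (dotv (col t A + a0) (U^T *m x t i)) =
  \sum_q rsign R (s q) * l (yy q) (dotv (col (tag q) A + a0) (U^T *m xx q)).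
  move=> s A a0 U.
  rewrite (sum_sig (fun t i => rsign R (s (Tagged (fun t => 'I_(m t)) i)) *
      l (y t i) (dotv (col t A + a0) (U^T *m x t i)))); apply: eq_bigr => -[t i] _ //.
have SV : forall s v, S s v -> exists p : P, v = V s p.
  move=> s v [A [a0 [U [UU hA ha ->]]]].
  by exists (exist feas (A, a0, U) (And3 UU hA ha)); exact: (Sconv s A a0 U).
have VS : forall s (p : P), S s (V s p).
  move=> s0 p0; case: p0 => [[[A a0] U] [UU hA ha]]; exists A, a0, U; split => //.
have gbound : forall (p : P) q, `|gg p q| <= B (fun q' => if q' == q then 1 else 0)
                                    + B (fun q' => if q' == q then -1 else 0).
  move=> p q.
  have E1 : \sum_q' (if q' == q then 1 else 0) * gg p q' = gg p q.
    rewrite (bigD1 q) //= eqxx mul1r big1 ?addr0 //.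
    by move=> q' /negbTE ->; rewrite mul0r.
  have E2 : \sum_q' (if q' == q then -1 else 0) * gg p q' = - gg p q.
    rewrite (bigD1 q) //= eqxx mulN1r big1 ?addr0 //.
    by move=> q' /negbTE ->; rewrite mul0r.
  have H1 := LB (fun q' => if q' == q then 1 else 0) p.
  have H2 := LB (fun q' => if q' == q then -1 else 0) p.
  rewrite /= E1 in H1; rewrite /= E2 in H2.
  have := B0 (fun q' => if q' == q then 1 else 0).
  have := B0 (fun q' => if q' == q then -1 else 0).
  rewrite ler_norml; move=> h1 h2; apply/andP; split; lra.
have f0 : feas (0, 0, 1%:M).
  split => /=.
  - by rewrite trmx1 mul1mx.
  - have -> : norm21 (0 : 'M[R]_(d, T)) = 0.
      rewrite /norm21 big1 // => i _; rewrite big1 ?sqrtr0 // => j _.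
      by rewrite mxE expr0n.
    by rewrite expr0n /= divr_ge0 ?ler0n ?ltW.
  - have -> : norm2 (0 : 'cV[R]_d) = 0.
      by rewrite /norm2 /dotv big1 ?sqrtr0 // => i _; rewrite mxE mul0r.
    by rewrite expr0n /= divr_ge0 ?ler01 ?ltW.
pose Bq q := B (fun q' => if q' == q then 1 else 0)
              + B (fun q' => if q' == q then -1 else 0).
have Vb : forall s p, V s p <= \sum_q (`|l (yy q) 0| + c * Bq q).
  move=> s p; apply: ler_sum => q _.
  apply: le_trans (ler_norm _) _.
  have -> : `|rsign R (s q) * l (yy q) (gg p q)| = `|l (yy q) (gg p q)|.
    by rewrite normrM; case: (s q); rewrite /rsign ?normrN normr1 mul1r.
  have := ler_normD (l (yy q) 0) (l (yy q) (gg p q) - l (yy q) 0).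
  rewrite addrC subrK => h; apply: le_trans h _; apply: lerD => //.
  apply: le_trans (Lip _ _ _) _; rewrite subr0.
  by apply: ler_wpM2l => //; exact: gbound.
have Shas : forall s, has_sup (S s).
  move=> s; split.
    by exists (V s (exist feas (0, 0, 1%:M) f0)); apply: VS.
  exists (\sum_q (`|l (yy q) 0| + c * Bq q)) => v /SV [p ->]; exact: Vb.
pose N : R := #|{ffun I -> bool}|%:R.
have Npos : 0 < N.
  by rewrite ltr0n; apply/card_gt0P; exists [ffun=> true].
pose M' := \sum_q dotv (xx q) (xx q).
have Mid : \sum_(t < T) (m t)%:R * Sdata (x t) = M'.
  rewrite /M' -(sum_sig (fun t i => dotv (x t i) (x t i))).
  apply: eq_bigr => t _; rewrite /Sdata.
  have [mt0|mt0] := eqVneq (m t) 0%N.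
    have -> : (m t)%:R = 0 :> R by rewrite mt0.
    rewrite mul0r big1 // => i _; have := ltn_ord i; move: (nat_of_ord i).
    by rewrite mt0.
  rewrite mulrA mulfV ?pnatr_eq0 // mul1r.
  by apply: eq_bigr => i _; rewrite norm2_sq.
pose X := c * (Num.sqrt (T%:R / gamma) + Num.sqrt (1 / beta)) * Num.sqrt M'.
have key : forall eps, 0 < eps ->
    \sum_(s : {ffun I -> bool}) sup (S s) <= N * X + N * eps.
  move=> eps ep.
  have : forall s, exists p : P, sup (S s) - eps < V s p.
    move=> s; have [v Sv lt] := sup_adherent ep (Shas s).
    by have [p ep'] := SV s v Sv; exists p; rewrite -ep'.
  case/fin_all_exists => pi Hpi.
  have [pi' Hc] := contraction gg c0 Lip pi.
  have S1 : \sum_(s : {ffun I -> bool}) sup (S s) <=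
            \sum_(s : {ffun I -> bool}) V s (pi s) + N * eps.
    have -> : N * eps = \sum_(s : {ffun I -> bool}) eps.
      by rewrite sumr_const mulr_natl.
    rewrite -big_split /=; apply: ler_sum => s _.
    by have := Hpi s; lra.
  have S3 : \sum_(s : {ffun I -> bool}) V s (pi s) <=
      c * \sum_(s : {ffun I -> bool}) B (fun q => rsign R (s q)).
    apply: le_trans Hc _.
    have -> : \sum_(s : {ffun I -> bool}) \sum_q rsign R (s q) * (c * gg (pi' s) q)
       = c * \sum_(s : {ffun I -> bool}) \sum_q rsign R (s q) * gg (pi' s) q.
      rewrite mulr_sumr; apply: eq_bigr => s _; rewrite mulr_sumr.
      by apply: eq_bigr => q _; ring.
    by apply: ler_wpM2l => //; apply: ler_sum => s _; exact: LB.
  have S4 : \sum_(s : {ffun I -> bool}) B (fun q => rsign R (s q)) <=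
      (Num.sqrt (T%:R / gamma) + Num.sqrt (1 / beta)) * (N * Num.sqrt M').
    have sN : Num.sqrt N * Num.sqrt N = N by rewrite -expr2 sqr_sqrtr // ltW.
    have fin : forall Q : {ffun I -> bool} -> R, (forall s, 0 <= Q s) ->
        \sum_s Q s = N * M' -> \sum_s Num.sqrt (Q s) <= N * Num.sqrt M'.
      move=> Q Q0 EQ; apply: le_trans (sum_sqrt Q0) _.
      by rewrite EQ sqrtrM ?(ltW Npos) // mulrAC sN.
    rewrite /B big_split /= -!mulr_sumr mulrDl.
    apply: lerD; apply: ler_wpM2l; rewrite ?sqrtr_ge0 //.
      apply: fin => [s|]; first by apply: sumr_ge0 => t _; apply: sqr_ge0.
      under eq_bigr do (under eq_bigr do rewrite norm2_sq).
      rewrite exchange_big /=.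
      under eq_bigr do rewrite (rad_sqv (fun q : I => tag q == _)).
      by rewrite -mulr_sumr /M' (partition_big (fun q => tag q) xpredT).
    apply: fin => [s|]; first exact: dotv_ge0.
    exact: (rad_sqv xpredT xx).
  have := ler_wpM2l c0 S4; rewrite /X; nra.
have H : N^-1 * \sum_(s : {ffun I -> bool}) sup (S s) <= X.
  apply/ler_addgt0Pr => eps ep.
  rewrite -(ler_pM2l Npos) mulrA mulfV ?gt_eqF // mul1r mulrDr.
  exact: key.
rewrite Mid.
change (2 * (N^-1 * \sum_(s : {ffun I -> bool}) sup (S s)) <=
   2 * c * (Num.sqrt (T%:R / gamma) + Num.sqrt (1 / beta)) * Num.sqrt M').
have -> : 2 * c * (Num.sqrt (T%:R / gamma) + Num.sqrt (1 / beta)) * Num.sqrt M'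
   = 2 * X by rewrite /X !mulrA.
by apply: ler_wpM2l.
Qed.
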